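(* Let $p$ be a prime and let $a,b,c$ be positive integers such that $c$ is a primitive divisor of $p^a-1$ and $bc$ is a primitive divisor of $p^{ab}-1$. Then the Waring numbers below exist and $$g\Big(\tfrac{p^{ab}-1}{bc},\,p^{ab}\Big)=b\,g\Big(\tfrac{p^a-1}{c},\,p^a\Big).$$
   Context: For a prime power $q$ and a positive integer $k$, the Waring number $g(k,q)$ is the smallest $s$ (if it exists) such that every element of $\mathbb{F}_q$ can be written as $x_1^k+\cdots+x_s^k$ with $x_i\in\mathbb{F}_q$. An integer $e$ is a primitive divisor of $p^a-1$ if $e\mid p^a-1$ and $e\nmid p^t-1$ for every $1\le t<a$. *)

(* Defs.v *)
From HB Require Import structures.
From mathcomp Require Import all_boot all_order all_algebra all_field.
Set Implicit Arguments. Unset Strict Implicit. Unset Printing Implicit Defensive.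
Import GRing.Theory.

Definition primitive_divisor (e p a : nat) : Prop :=
  (e %| p ^ a - 1)%N /\ forall t : nat, (0 < t)%N -> (t < a)%N -> ~~ (e %| p ^ t - 1)%N.

Definition waring_sum (F : finFieldType) (k s : nat) : Prop :=
  forall x : F, exists xs : s.-tuple F, x = (\sum_(i < s) (tnth xs i) ^+ k)%R.

Definition is_waring_number (F : finFieldType) (k g : nat) : Prop :=
  waring_sum F k g /\ forall s : nat, waring_sum F k s -> (g <= s)%N.

(* Main.v *)
Require Import Defs.
From HB Require Import structures.
From mathcomp Require Import all_boot all_order all_algebra all_solvable all_field.
Set Implicit Arguments. Unset Strict Implicit. Unset Printing Implicit Defensive.
Import GRing.Theory.
Local Open Scope ring_scope.

Section Basic.
Variable F : finFieldType.

Lemma expf_card1 (x : F) : x != 0 -> x ^+ (#|F|.-1) = 1.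
Proof.
move=> nx; apply: (mulIf nx); rewrite mul1r -exprSr prednK ?expf_card //.
by rewrite (cardD1 x).
Qed.

Lemma prim_root_exists : exists w : F, (#|F|.-1).-primitive_root w.
Proof.
have q1 : (0 < #|F|.-1)%N by rewrite -ltnS prednK ?finNzRing_gt1 // (cardD1 0).
have H1 : all (#|F|.-1).-unity_root (enum (predC1 (0:F))).
  apply/allP => x; rewrite mem_enum /= => nx; by rewrite unity_rootE expf_card1.
have H2 : (#|F|.-1 <= size (enum (predC1 (0%R:F))))%N by rewrite -cardE cardC1.
have := has_prim_root q1 H1 (enum_uniq _) H2.
by case/hasP => w _ pw; exists w.
Qed.

Lemma kpowP (d : nat) (x : F) : (0 < d)%N -> (d %| #|F|.-1)%N ->
  (exists y, x = y ^+ (#|F|.-1 %/ d)) <-> (x == 0) || (x ^+ d == 1).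
Proof.
move=> d0 dq.
have q0 : (0 < #|F|.-1)%N by rewrite -ltnS prednK ?finNzRing_gt1 // (cardD1 0).
have k0 : (0 < #|F|.-1 %/ d)%N by rewrite divn_gt0 // dvdn_leq.
split.
  case=> y ->; have [->|ny] := eqVneq y 0; first by rewrite expr0n eqn0Ngt k0 eqxx.
  by rewrite -exprM divnK // expf_card1 // eqxx orbT.
have [-> _|nx /= /eqP xd] := eqVneq x 0; first by exists 0; rewrite expr0n eqn0Ngt k0.
have [w pw] := prim_root_exists.
have [i xi] := prim_rootP pw (expf_card1 nx).
have : (#|F|.-1 %| i * d)%N by rewrite (prim_order_dvd pw) exprM -xi xd.
rewrite -{1}(divnK dq) dvdn_pmul2r // => /dvdnP[j ij].
by exists (w ^+ j); rewrite -exprM xi ij.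
Qed.

Definition Pd (d : nat) := [pred x : F | (x == 0) || (x ^+ d == 1)].

Definition sumA (P : pred F) (s : nat) (x : F) :=
  exists l : seq F, [/\ size l = s, all P l & x = \sum_(y <- l) y].

Lemma waringE (d s : nat) : (0 < d)%N -> (d %| #|F|.-1)%N ->
  waring_sum F (#|F|.-1 %/ d) s <-> forall x, sumA (Pd d) s x.
Proof.
move=> d0 dq; set k := (#|F|.-1 %/ d)%N; split.
  move=> W x; have [xs ->] := W x.
  exists (map (fun y => y ^+ k) xs); split.
  - by rewrite size_map size_tuple.
  - by apply/allP => z /mapP[y _ ->]; apply/(kpowP _ d0 dq); exists y.
  - by rewrite big_map (big_tuple _ _ xs (fun _ => true) (fun y => y ^+ k)).
move=> W x; have [l [sl al ->]] := W x.
have [ys eys] : exists ys, map (fun y => y ^+ k) ys = l.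
  elim: l al {sl} => [|z l IH] /=; first by exists [::].
  case/andP => /(kpowP _ d0 dq)[y ->] /IH[ys <-]; by exists (y :: ys).
have sy : size ys == s by rewrite -sl -eys size_map.
exists (Tuple sy); rewrite -eys big_map.
by rewrite -(big_tuple _ _ (Tuple sy) (fun _ => true) (fun y => y ^+ k)).
Qed.
End Basic.

Lemma gen (F : finFieldType) p n d (z : F) : prime p -> #|F| = (p ^ n)%N ->
  primitive_divisor d p n -> d.-primitive_root z ->
  forall x : F, exists l : seq nat, x = \sum_(i <- l) z ^+ i.
Proof.
move=> pp oF [dv nd] pz.
have pcharFp := card_finPcharP oF pp.
pose L := pPrimeCharType pcharFp.
pose K : {subfield L} := <<1; (z : L)>>%AS.
have zK : (z : L) \in K := memv_adjoin _ _.
have := Fermat's_little_theorem K (z : L); rewrite zK card_Fp // => /esym/eqP Hz.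
have z0 : z != 0.
  apply/eqP => z0; have := prim_expr_order pz; rewrite z0.
  by rewrite expr0n (eqn0Ngt d) (prim_order_gt0 pz) /= => /eqP; rewrite eq_sym oner_eq0.
have dm : (d %| p ^ \dim K - 1)%N.
  rewrite (prim_order_dvd pz); apply/eqP; apply: (mulIf z0); rewrite mul1r -exprSr subn1 prednK //.
  by rewrite expn_gt0 prime_gt0.
have dimf : \dim (fullv : {vspace L}) = n.
  have := card_vspace (fullv : {vspace L}); rewrite card_vspacef card_Fp // => e.
  apply/eqP; rewrite -(eqn_exp2l _ _ (prime_gt1 pp)) -e.
  by apply/eqP; exact: oF.
have dimK : \dim K = n.
  apply/eqP; rewrite eqn_leq -{1}dimf dimvS ?subvf //=.
  rewrite leqNgt; apply/negP => Kn.
  by move: (nd _ (adim_gt0 _) Kn); rewrite dm.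
have KF : K = fullv :> {vspace L}.
  by apply/eqP; rewrite -(dimv_leqif_eq (subvf K)) dimK dimf.
move=> x.
have xK : (x : L) \in <<1; (z : L)>>%VS by rewrite KF memvf.
have := Fadjoin_poly_eq xK.
have /polyOver1P[q ->] := Fadjoin_polyOver 1 (z : L) (x : L).
move=> <-.
rewrite horner_coef.
apply: (big_ind (fun y : L => exists l : seq nat, y = \sum_(i <- l) (z : L) ^+ i)).
- by exists [::]; rewrite big_nil.
- move=> y1 y2 [l1 ->] [l2 ->]; exists (l1 ++ l2); by rewrite big_cat.
move=> i _; rewrite coef_map /=.
exists (nseq (nat_of_ord (q`_i)) (nat_of_ord i)).
rewrite big_nseq.
change (((q`_i)%R : nat)%:R * 1 * (z : L) ^+ i = iter ((q`_i)%R : nat) (+%R ((z : L) ^+ i)) 0).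
rewrite mulr1 mulr_natl; move: (nat_of_ord (q`_i)%R) => m.
elim: m => [|m IH] /=; first by rewrite mulr0n.
by rewrite mulrS IH.
Qed.

Lemma expf_cardX (F : finFieldType) (x : F) k : x ^+ (#|F| ^ k) = x.
Proof.
elim: k => [|k IH]; first by rewrite expn0 expr1.
by rewrite expnS mulnC exprM IH expf_card.
Qed.

Section Embed.
Variables (p a b : nat) (F1 F2 : finFieldType).
Hypotheses (pp : prime p) (oF1 : #|F1| = (p ^ a)%N) (oF2 : #|F2| = (p ^ (a * b))%N).

Let pc1 := card_finPcharP oF1 pp.
Let pc2 := card_finPcharP oF2 pp.
Let L1 := pPrimeCharType pc1.
Let L2 := pPrimeCharType pc2.
Local Notation m1 f := (map_poly (in_alg L1) f).
Local Notation m2 f := (map_poly (in_alg L2) f).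

Lemma transfer : exists2 w : L1, (#|F1|.-1).-primitive_root (w : F1) &
  exists w' : L2, forall f : {poly 'F_p}, root (m1 f) w -> root (m2 f) w'.
Proof.
have [w pw] := prim_root_exists F1.
exists (w : L1) => //.
have /polyOver1P[m0 em0] := minPolyOver 1 (w : L1).
have T : forall f : {poly 'F_p}, root (m1 f) w -> (m0 %| f)%R.
  move=> f rf; rewrite -(dvdp_map (in_alg L1)) -em0 minPoly_dvdp //.
  by apply/polyOver1P; exists f.
pose N := (p ^ (a * b))%N.
have : (m0 %| 'X^N - 'X)%R.
  apply: T; rewrite rmorphB /= map_polyXn map_polyX rootE !hornerE.
  by rewrite /N expnM -oF1 (expf_cardX (w : F1)) subrr.
rewrite -(dvdp_map (in_alg L2)) rmorphB /= map_polyXn map_polyX.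
have G := finField_genPoly F2.
have G' : 'X^N - 'X = \prod_(x : F2) ('X - (x : L2)%:P) :> {poly L2}.
  rewrite /N -oF2. exact: G.
rewrite G' => /dvdp_prod_XsubC[mk Hm].
have sz : (1 < size (m2 m0))%N.
  rewrite size_map_poly -(size_map_poly (in_alg L1)) -em0.
  apply: (@root_size_gt1 _ (w : L1)); first exact/monic_neq0/monic_minPoly.
  exact: root_minPoly.
move: Hm; case E: (mask mk _) => [|x0 r] Hm.
  by move: sz; rewrite (eqp_size Hm) big_nil size_poly1.
have r0 : root (m2 m0) x0 by rewrite (eqp_root Hm) root_prod_XsubC mem_head.
exists (x0 : L2) => f /T /dvdpP[h ->].
by rewrite rmorphM rootE hornerM (rootP r0) mulr0.
Qed.

Lemma embed : exists phi : F1 -> F2,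
  [/\ {morph phi : x y / x + y}, {morph phi : x y / x * y}, phi 1 = 1 & injective phi].
Proof.
have [w pw [w' Tw]] := transfer.
have ex : forall x : L1, exists f : {poly 'F_p}, (m1 f).[w] == x.
  move=> x; have [->|nx] := eqVneq x 0; first by exists 0; rewrite rmorph0 horner0.
  have [i ->] := prim_rootP pw (expf_card1 (nx : (x : F1) != 0)).
  by exists 'X^i; rewrite map_polyXn hornerXn.
pose fx x := xchoose (ex x).
have fxP : forall x, (m1 (fx x)).[w] = x by move=> x; apply/eqP/(xchooseP (ex x)).
have WD : forall f g, (m1 f).[w] = (m1 g).[w] -> (m2 f).[w'] = (m2 g).[w'].
  move=> f g e; apply/eqP; rewrite -subr_eq0 -hornerN -hornerD -rmorphB; apply: Tw.
  by rewrite rmorphB rootE hornerD hornerN e subrr.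
pose phi (x : F1) : F2 := (m2 (fx x)).[w'].
have add : {morph phi : x y / x + y}.
  move=> x y; rewrite /phi (WD _ (fx x + fx y)); first by rewrite rmorphD hornerD.
  by rewrite rmorphD hornerD !fxP.
have mul : {morph phi : x y / x * y}.
  move=> x y; rewrite /phi (WD _ (fx x * fx y)); first by rewrite rmorphM hornerM.
  by rewrite rmorphM hornerM !fxP.
have one : phi 1 = 1.
  rewrite /phi (WD _ 1); first by rewrite rmorph1 hornerC.
  by rewrite fxP rmorph1 hornerC.
exists phi; split => //.
have w'1 : w' ^+ (#|F1|.-1) = 1.
  have := Tw ('X^(#|F1|.-1) - 1); rewrite !rmorphB /= !map_polyXn !rmorph1.
  rewrite !rootE !hornerE !subr_eq0 => H; apply/eqP/H.
  by apply/eqP/(prim_expr_order pw).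
have z0 : forall z, phi z = 0 -> z = 0.
  move=> z; have [->|nz] := eqVneq z 0 => // e.
  have [i ezi] := prim_rootP pw (expf_card1 nz).
  have : (m2 'X^i).[w'] = 0.
    rewrite -e /phi; apply: WD; rewrite fxP map_polyXn hornerXn; exact: esym ezi.
  rewrite map_polyXn hornerXn => /eqP; rewrite expf_eq0 => /andP[_ /eqP w'0].
  move: w'1; rewrite w'0 expr0n -[_ == 0%N]negbK -lt0n (prim_order_gt0 pw) /=.
  by move/eqP; rewrite eq_sym oner_eq0.
move=> x y e; apply/eqP; rewrite -subr_eq0; apply/eqP/z0.
have : phi (x - y) + phi y = phi y + 0 by rewrite -add subrK addr0 e.
by rewrite addrC => /addrI.
Qed.
End Embed.

Section SumA.
Variables (F : finFieldType) (P : pred F).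

Lemma sumA0 : sumA P 0 0.
Proof. by exists [::]; rewrite big_nil. Qed.

Lemma sumA1 x : P x -> sumA P 1 x.
Proof. by move=> Px; exists [:: x]; rewrite big_seq1 /= Px. Qed.

Lemma sumA_add s t x y : sumA P s x -> sumA P t y -> sumA P (s + t) (x + y).
Proof.
move=> [l1 [<- a1 ->]] [l2 [<- a2 ->]].
by exists (l1 ++ l2); rewrite size_cat all_cat a1 a2 big_cat.
Qed.

Lemma sumA_mono s t x : P 0 -> (s <= t)%N -> sumA P s x -> sumA P t x.
Proof.
move=> P0 st [l [sl al ->]]; rewrite -sl in st; exists (l ++ nseq (t - size l) 0).
rewrite size_cat size_nseq subnKC // all_cat al /= big_cat /= big_nseq.
split => //; last first.
  by elim: (t - size l)%N => [|m IH] /=; rewrite ?addr0 // add0r.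
by apply/allP => z /nseqP[-> _].
Qed.

Lemma sumA_unif : P 0 -> (forall x, exists s, sumA P s x) -> exists s, forall x, sumA P s x.
Proof.
move=> P0 H.
suff : forall l : seq F, exists s, forall x, x \in l -> sumA P s x.
  by case/(_ (enum F)) => s Hs; exists s => x; apply: Hs; rewrite mem_enum.
elim => [|y l [s IH]]; first by exists 0%N.
have [t Ht] := H y; exists (maxn s t) => x; rewrite inE => /orP[/eqP->|xl].
  by apply: sumA_mono Ht; rewrite // leq_maxr.
by apply: sumA_mono (IH _ xl); rewrite // leq_maxl.
Qed.
End SumA.

Section Decomp.
Variables (F1 F2 : finFieldType) (b c : nat) (phi : F1 -> F2).
Hypotheses (b0 : (0 < b)%N) (c0 : (0 < c)%N).
Hypotheses (add : {morph phi : x y / x + y}) (mul : {morph phi : x y / x * y})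
  (one : phi 1 = 1) (inj : injective phi).
Variables (w1 : F1) (z : F2).
Hypotheses (pw1 : c.-primitive_root w1) (pz : (b * c).-primitive_root z).
Hypothesis gen2 : forall x : F2, exists l : seq nat, x = \sum_(i <- l) z ^+ i.
Hypothesis card12 : #|F2| = (#|F1| ^ b)%N.

Local Notation P1 := (Pd F1 c).
Local Notation P2 := (Pd F2 (b * c)).

Lemma phi0 : phi 0 = 0.
Proof. by apply: (@addrI _ (phi 0)); rewrite -add !addr0. Qed.

Lemma phiN x : phi (- x) = - phi x.
Proof. by apply: (@addrI _ (phi x)); rewrite -add !subrr phi0. Qed.

Lemma phiX x n : phi (x ^+ n) = phi x ^+ n.
Proof. by elim: n => [|n IH]; rewrite ?one // !exprS mul IH. Qed.

Lemma phi_sum (l : seq F1) : phi (\sum_(y <- l) y) = \sum_(y <- l) phi y.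
Proof.
elim: l => [|y l IH]; first by rewrite !big_nil phi0.
by rewrite !big_cons add IH.
Qed.

Lemma prim_phi : c.-primitive_root (phi w1).
Proof.
have [m pm mc] := prim_order_exists c0 (etrans (esym (phiX _ _)) (etrans (congr1 phi (prim_expr_order pw1)) one)).
suff cm : (c %| m)%N by rewrite (_ : c = m) // ; apply/eqP; rewrite eqn_dvd mc cm.
rewrite (prim_order_dvd pw1); apply/eqP/inj; rewrite phiX one; exact: prim_expr_order pm.
Qed.

Lemma P1toP2 y (r : nat) : P1 y -> P2 (z ^+ r * phi y).
Proof.
rewrite !inE => /orP[/eqP->|/eqP yc]; first by rewrite phi0 mulr0 eqxx.
apply/orP; right; rewrite exprMn -exprM mulnC exprM (prim_expr_order pz) expr1n mul1r.
by rewrite mulnC exprM -phiX yc one expr1n.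
Qed.

Lemma P2dec t : P2 t -> exists (r : 'I_b) y, P1 y /\ t = z ^+ r * phi y.
Proof.
rewrite inE => /orP[/eqP->|/eqP tc].
  by exists (Ordinal b0), 0; rewrite phi0 mulr0 inE eqxx.
have [i ->] := prim_rootP pz tc.
have zb : (z ^+ b) ^+ c = 1 by rewrite -exprM prim_expr_order.
have [j ej] := prim_rootP prim_phi zb.
exists (Ordinal (ltn_pmod i b0)), ((w1 ^+ j) ^+ (i %/ b)); split.
  rewrite inE -!exprM (_ : (j * (i %/ b) * c = c * (j * (i %/ b)))%N); last by rewrite mulnC.
  by rewrite (exprM w1 c) (prim_expr_order pw1) expr1n eqxx orbT.
rewrite /= !phiX -ej -exprM -exprD; congr (_ ^+ _).
by rewrite (mulnC b (i %/ b)%N) addnC -divn_eq.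
Qed.

Definition Psi (Y : {ffun 'I_b -> F1}) : F2 := \sum_(r < b) z ^+ r * phi (Y r).

Definition upd (Y : {ffun 'I_b -> F1}) (r : 'I_b) y :=
  [ffun j => if j == r then Y j + y else Y j].

Lemma Psi_upd Y r y : Psi (upd Y r y) = Psi Y + z ^+ r * phi y.
Proof.
rewrite /Psi [LHS](bigD1 r) // [in RHS](bigD1 r) //= ffunE eqxx add mulrDr.
rewrite -!addrA; congr (_ + _); rewrite addrC; congr (_ + _).
by apply: eq_bigr => j /negbTE nj; rewrite ffunE nj.
Qed.

Lemma Psi0 : Psi [ffun => 0] = 0.
Proof. by rewrite /Psi big1 // => r _; rewrite ffunE phi0 mulr0. Qed.

Lemma Psi_surj x : exists Y, Psi Y = x.
Proof.
have [l ->] := gen2 x.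
elim: l => [|i l [Y IH]]; first by exists [ffun => 0]; rewrite Psi0 big_nil.
have zi : P2 (z ^+ i).
  by rewrite inE -exprM (mulnC i) exprM (prim_expr_order pz) expr1n eqxx orbT.
have [r [y [_ ey]]] := P2dec zi.
by exists (upd Y r y); rewrite Psi_upd IH big_cons ey addrC.
Qed.

Lemma Psi_inj : injective Psi.
Proof.
have cT : #|{ffun 'I_b -> F1}| = #|F2| by rewrite card_ffun card_ord card12.
have H : #|image Psi {ffun 'I_b -> F1}| == #|{ffun 'I_b -> F1}|.
  rewrite eqn_leq leq_image_card cT /=.
  apply: subset_leq_card; apply/subsetP => x _.
  have [Y <-] := Psi_surj x; exact: image_f.
move: H => /image_injP inj' x y e; exact: inj'.
Qed.
Lemma dec_down l : all P2 l -> forall Y, Psi Y = \sum_(t <- l) t ->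
  exists cnt : 'I_b -> nat, (\sum_r cnt r)%N = size l /\ forall r, sumA P1 (cnt r) (Y r).
Proof.
elim: l => [|t l IH] /=.
  move=> _ Y; rewrite big_nil -Psi0 => /Psi_inj ->.
  exists (fun _ => 0%N); split; first by rewrite big1.
  by move=> r; rewrite ffunE; apply: sumA0.
case/andP=> Pt al Y eY.
have [r [y [Py ey]]] := P2dec Pt.
have e' : Psi (upd Y r (- y)) = \sum_(t <- l) t.
  by rewrite Psi_upd eY big_cons phiN mulrN ey addrC addKr.
have [cnt' [s' H']] := IH al _ e'.
exists (fun j => cnt' j + (j == r))%N; split.
  rewrite big_split /= s' (bigD1 r) //= eqxx big1 => [|j /negbTE->] //.
  by rewrite addn0 addn1.
move=> j; have := H' j; rewrite ffunE; case: eqP => [->|_] Hj.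
  by rewrite -(subrK y (Y r)); apply: sumA_add Hj (sumA1 Py).
by rewrite addn0.
Qed.

Lemma dec_up n (Y : {ffun 'I_b -> F1}) : (forall r, sumA P1 n (Y r)) -> sumA P2 (b * n) (Psi Y).
Proof.
move=> H.
have term : forall r : 'I_b, sumA P2 n (z ^+ r * phi (Y r)).
  move=> r; have [l [sl al eY]] := H r.
  exists (map (fun y => z ^+ r * phi y) l); split.
  - by rewrite size_map.
  - by apply/allP => t /mapP[y yl ->]; apply: P1toP2; apply: (allP al).
  - by rewrite big_map -mulr_sumr -phi_sum eY.
have gen : forall rs : seq 'I_b, sumA P2 (size rs * n) (\sum_(r <- rs) z ^+ r * phi (Y r)).
  elim => [|r rs IHr]; first by rewrite big_nil mul0n; apply: sumA0.
  by rewrite big_cons /= mulSn; apply: sumA_add.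
have sb : size (index_enum 'I_b) = b by rewrite [index_enum _]unlock -enumT size_enum_ord.
by have := gen (index_enum 'I_b); rewrite sb.
Qed.
End Decomp.

From Stdlib Require Import Classical.

Lemma ex_min_prop (P : nat -> Prop) : (exists n, P n) ->
  exists m, P m /\ forall k, P k -> (m <= k)%N.
Proof.
case=> n; elim: n {-2}n (leqnn n) => [|N IH] n hn Pn.
  exists n; split => // k _; by move: hn; rewrite leqn0 => /eqP->.
case: (classic (exists k, P k /\ (k < n)%N)) => [[k [Pk kn]]|H].
  by apply: (IH k) => //; rewrite -ltnS (leq_trans kn hn).
exists n; split => // k Pk; rewrite leqNgt; apply/negP => kn; apply: H; by exists k.
Qed.

Lemma Pd0 (F : finFieldType) d : Pd F d 0.
Proof. by rewrite inE eqxx. Qed.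

Local Close Scope ring_scope.

Theorem mainTheorem3 (p a b c : nat) (F1 F2 : finFieldType) :
  prime p -> (0 < a)%N -> (0 < b)%N -> (0 < c)%N ->
  primitive_divisor c p a ->
  primitive_divisor (b * c) p (a * b) ->
  #|F1| = (p ^ a)%N -> #|F2| = (p ^ (a * b))%N ->
  exists g1 g2 : nat,
    [/\ is_waring_number F1 ((p ^ a - 1) %/ c) g1,
        is_waring_number F2 ((p ^ (a * b) - 1) %/ (b * c)) g2
      & g2 = (b * g1)%N].
Proof.
Local Open Scope ring_scope.
move=> pp a0 b0 c0 pd1 pd2 oF1 oF2.
have q1 : #|F1|.-1 = (p ^ a - 1)%N by rewrite oF1 subn1.
have q2 : #|F2|.-1 = (p ^ (a * b) - 1)%N by rewrite oF2 subn1.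
rewrite -q1 -q2.
have cdF : (c %| #|F1|.-1)%N by rewrite q1; case: pd1.
have bcdF : (b * c %| #|F2|.-1)%N by rewrite q2; case: pd2.
have bc0 : (0 < b * c)%N by rewrite muln_gt0 b0 c0.
have [w1 pw1] := prim_root_exists F1.
have [w2 pw2] := prim_root_exists F2.
have pom := dvdn_prim_root pw1 cdF.
have pz := dvdn_prim_root pw2 bcdF.
have [phi [add mul one inj]] := embed pp oF1 oF2.
have gen2 := gen pp oF2 pd2 pz.
have gen1 := gen pp oF1 pd1 pom.
have card12 : #|F2| = (#|F1| ^ b)%N by rewrite oF1 oF2 expnM.
set om := w1 ^+ _ in pom gen1.
set z := w2 ^+ _ in pz gen2.
have EX : exists s, forall x, sumA (Pd F1 c) s x.
  apply: sumA_unif; first exact: Pd0.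
  move=> x; have [l ->] := gen1 x; exists (size l).
  exists (map (fun i => om ^+ i) l); split.
  - by rewrite size_map.
  - apply/allP => t /mapP[i _ ->]; rewrite inE -exprM mulnC exprM (prim_expr_order pom).
    by rewrite expr1n eqxx orbT.
  - by rewrite big_map.
have [g1 [Hg1 Hmin]] := ex_min_prop EX.
exists g1, (b * g1)%N; split => //.
  split; first by apply/(waringE _ c0 cdF).
  by move=> s /(waringE _ c0 cdF); apply: Hmin.
split.
  apply/(waringE _ bc0 bcdF) => x.
  have [Y <-] := Psi_surj b0 c0 add mul one inj pom pz gen2 x.
  by apply: (dec_up add mul one pz) => r; apply: Hg1.
move=> s /(waringE _ bc0 bcdF) W.
have Hy0 : exists y, forall t, sumA (Pd F1 c) t y -> (g1 <= t)%N.
  apply: NNPP => Hn.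
  have Hy : forall y, exists t, sumA (Pd F1 c) t y /\ (t < g1)%N.
    move=> y; have H1 := not_ex_all_not _ _ Hn y.
    have [t H2] := not_all_ex_not _ _ H1.
    have [st gt] := imply_to_and _ _ H2.
    by exists t; split => //; rewrite ltnNge; apply/negP.
  have [t0 [_ t0g]] := Hy 0%R.
  have : (g1 <= g1.-1)%N.
    apply: Hmin => y; have [t [st tg]] := Hy y.
    by apply: sumA_mono st; [exact: Pd0 | rewrite -ltnS prednK // (leq_ltn_trans _ t0g)].
  have g0 : (0 < g1)%N := leq_ltn_trans (leq0n _) t0g.
  by rewrite leqNgt ltn_predL g0.
have [ys Hys] := Hy0.
have [l [sl al el]] := W (Psi phi z ([ffun => ys] : {ffun 'I_b -> F1})).
have := dec_down b0 c0 add mul one inj pom pz gen2 card12 al el.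
move=> [cnt [scnt Hc]].
have H : (\sum_(r < b) g1 <= \sum_(r < b) cnt r)%N.
  apply: leq_sum => r _; apply: Hys; have := Hc r; by rewrite ffunE.
by move: H; rewrite sum_nat_const card_ord scnt sl.
Qed.
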